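(* Let $m_1,\ldots,m_s$ be positive integers. Put $a_1=(m_1,\ldots,m_s)$, $a_k=[m_{k-1},(m_k,\ldots,m_s)]$ for $k=2,\ldots,s-1$, and $a_s=[m_{s-1},m_s]$ (when $s\ge2$). Then $$\mathbb{Z}_{m_1}\times\cdots\times\mathbb{Z}_{m_s}\cong\mathbb{Z}_{a_1}\times\cdots\times\mathbb{Z}_{a_s}.$$
   Context: $\mathbb{Z}_m$ denotes a cyclic group of order $m$; $(\cdot,\ldots,\cdot)$ and $[\cdot,\ldots,\cdot]$ denote gcd and lcm. *)

(* Defs.v *)
From HB Require Import structures.
From mathcomp Require Import all_boot all_order all_algebra.
Set Implicit Arguments. Unset Strict Implicit. Unset Printing Implicit Defensive.
Import GRing.Theory.

(* Z_n as the ring/additive group of integers mod n, for n >= 1: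
   'I_n.-1.+1 carries the canonical Zp zmodType structure; when 0 < n it is
   exactly Z/nZ (for n = 1 it is the trivial group). *)
Definition cyc (n : nat) : zmodType := 'I_n.-1.+1.

(* The direct product Z_{m 1} x ... x Z_{m s} (indices 1..s), as dependent
   finite functions, with componentwise addition. *)
Definition cycprod (s : nat) (m : nat -> nat) :=
  {dffun forall i : 'I_s, cyc (m i.+1)}.

Definition cycprod_add (s : nat) (m : nat -> nat) (x y : cycprod s m) :
  cycprod s m := [ffun i => (x i + y i)%R].

Definition cycprod_iso (s t : nat) (m n : nat -> nat) : Prop :=
  exists phi : cycprod s m -> cycprod t n,
    bijective phi /\
    forall x y, phi (cycprod_add x y) = cycprod_add (phi x) (phi y).

Definition gcd_from (s : nat) (m : nat -> nat) (k : nat) : nat :=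
  \big[gcdn/0]_(k <= j < s.+1) m j.

Definition a_seq (s : nat) (m : nat -> nat) (k : nat) : nat :=
  if k == 1 then gcd_from s m 1
  else if k == s then lcmn (m s.-1) (m s)
  else lcmn (m k.-1) (gcd_from s m k).

(* Main.v *)
Require Import Defs.
From mathcomp Require Import all_boot all_order all_algebra ring zify.
Import GRing.Theory Num.Theory.
Set Implicit Arguments. Unset Strict Implicit. Unset Printing Implicit Defensive.
Local Open Scope ring_scope.
Definition mkc N (z : int) : cyc N := inZp `|(z %% N%:Z)%Z|%N.

Lemma val_mkc N z : (0 < N)%N -> (val (mkc N z))%:Z = (z %% N%:Z)%Z.
Proof.
move=> N0; rewrite /= prednK // -modz_nat abszE ger0_norm ?modz_mod //.
by apply: modz_ge0; rewrite eqz_nat -lt0n.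
Qed.

Lemma valcP N (x : cyc N) : (0 < N)%N -> (val x < N)%N.
Proof. move=> N0; have H := ltn_ord x; have E : N.-1.+1 = N by rewrite prednK.
by rewrite -[X in (_ < X)%N]E. Qed.

Lemma eqc N (y1 y2 : cyc N) : (0 < N)%N ->
  (N%:Z %| (val y1)%:Z - (val y2)%:Z)%Z -> y1 = y2.
Proof.
move=> N0; rewrite -eqz_mod_dvd !modz_nat => /eqP [] H.
by apply: val_inj; rewrite /= -(modn_small (valcP y1 N0)) H modn_small // valcP.
Qed.

Lemma modpred a N : (0 < N)%N -> (a %% N.-1.+1 = a %% N)%N.
Proof. by move=> N0; rewrite prednK. Qed.

Lemma val_addc N (x y : cyc N) : (0 < N)%N -> val (x + y) = ((val x + val y) %% N)%N.
Proof. by move=> N0; rewrite -modpred. Qed.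

Lemma card_cycprod s m : (forall i : 'I_s, 0 < m i.+1)%N ->
  #|{: cycprod s m}| = (\prod_(i < s) m i.+1)%N.
Proof.
move=> mp; rewrite /cycprod card_dep_ffun foldrE big_map big_enum /=.
by apply: eq_bigr => i _; rewrite card_ord prednK.
Qed.

Lemma mat_iso s (m n : nat -> nat) (c : 'I_s -> 'I_s -> int) :
  (forall i : 'I_s, 0 < m i.+1)%N -> (forall i : 'I_s, 0 < n i.+1)%N ->
  (\prod_(i < s) m i.+1 = \prod_(i < s) n i.+1)%N ->
  (forall i j, ((n i.+1)%:Z %| c i j * (m j.+1)%:Z)%Z) ->
  (forall x : 'I_s -> int, (forall i, ((n i.+1)%:Z %| \sum_j c i j * x j)%Z) ->
     forall j, ((m j.+1)%:Z %| x j)%Z) ->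
  cycprod_iso s s m n.
Proof.
move=> mp np hprod hA hB.
pose phi (x : cycprod s m) : cycprod s n :=
  [ffun i : 'I_s => mkc (n i.+1) (\sum_j c i j * (val (x j))%:Z)].
exists phi; split.
- apply: inj_card_bij; last by rewrite !card_cycprod // hprod.
  move=> x y /ffunP H; apply/ffunP => j; apply: eqc (mp j) _.
  apply: (hB (fun j => (val (x j))%:Z - (val (y j))%:Z)) => i.
  have := H i; rewrite !ffunE => /(congr1 (fun z => (val z)%:Z)).
  rewrite !val_mkc // => /eqP; rewrite eqz_mod_dvd -sumrB.
  by under eq_bigr do rewrite -mulrBr.
- move=> x y; apply/ffunP => i; rewrite !ffunE; apply: eqc (np i) _.
  rewrite -eqz_mod_dvd val_mkc //.
  have -> : (val (mkc (n i.+1) (\sum_j c i j * (val (x j))%:Z) +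
           mkc (n i.+1) (\sum_j c i j * (val (y j))%:Z)))%:Z =
     (((val (mkc (n i.+1) (\sum_j c i j * (val (x j))%:Z)))%:Z +
      (val (mkc (n i.+1) (\sum_j c i j * (val (y j))%:Z)))%:Z) %% (n i.+1)%:Z)%Z.
    by rewrite /= -modz_nat prednK ?np.
  rewrite !modz_mod !val_mkc // modzDml modzDmr eqz_mod_dvd.
  rewrite -big_split /= -sumrB.
  apply: rpred_sum => j _; rewrite -mulrDr -mulrBr.
  have -> : (val ((cycprod_add x y) j))%:Z - ((val (x j))%:Z + (val (y j))%:Z)
       = - (((val (x j) + val (y j)) %/ m j.+1)%N%:Z * (m j.+1)%:Z).
    rewrite ffunE val_addc ?mp //.
    have -> : (val (x j))%:Z + (val (y j))%:Z =
      ((val (x j) + val (y j)) %/ m j.+1 * m j.+1 + (val (x j) + val (y j)) %% m j.+1)%N%:Z.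
      by rewrite -divn_eq.
    by rewrite PoszD PoszM opprD addrCA addrN addr0.
  by rewrite mulrN rpredN mulrA mulrAC; apply: dvdz_mulr.
Qed.

Lemma iso_trans s m n p : cycprod_iso s s m n -> cycprod_iso s s n p -> cycprod_iso s s m p.
Proof.
move=> [f [bf hf]] [g [bg hg]]; exists (g \o f); split; first exact: bij_comp.
by move=> x y /=; rewrite hf hg.
Qed.

Lemma sum_delta s (i : 'I_s) (x : 'I_s -> int) : \sum_j ((i == j)%:R * x j) = x i.
Proof.
rewrite (bigD1 i) //= eqxx mul1r big1 ?addr0 // => j /negbTE.
by rewrite eq_sym => ->; rewrite mul0r.
Qed.

Lemma ext_iso s (m n : nat -> nat) : (forall i : 'I_s, 0 < m i.+1)%N ->
  (forall i : 'I_s, n i.+1 = m i.+1) -> cycprod_iso s s m n.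
Proof.
move=> mp E; apply: (@mat_iso s m n (fun i j => (i == j)%:R)) => //.
- by move=> i; rewrite E.
- by apply: eq_bigr => i _; rewrite E.
- move=> i j; case: eqP => [->|_]; last by rewrite mul0r dvdz0.
  by rewrite mul1r E dvdzz.
- by move=> x H j; have := H j; rewrite sum_delta E.
Qed.
Lemma step_iso s (m n : nat -> nat) (K0 K1 : 'I_s) : val K1 = (val K0).+1 ->
  (forall i : 'I_s, 0 < m i.+1)%N -> (forall i : 'I_s, 0 < n i.+1)%N ->
  (forall i : 'I_s, i != K0 -> i != K1 -> n i.+1 = m i.+1) ->
  n K0.+1 = gcdn (m K0.+1) (m K1.+1) -> n K1.+1 = lcmn (m K0.+1) (m K1.+1) ->
  cycprod_iso s s m n.
Proof.
move=> hK mp np E EK0 EK1.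
have K10 : (K1 != K0) by apply/eqP => /(congr1 val); rewrite hK => /eqP; rewrite eqn_leq ltnn.
set p := m K0.+1 in EK0 EK1 *; set q := m K1.+1 in EK0 EK1 *.
set g := gcdn p q in EK0 EK1 *; set l := lcmn p q in EK1 *.
have p0 : (0 < p)%N by apply: mp.
have g0 : (0 < g)%N by rewrite gcdn_gt0 p0.
have gp : (g %| p)%N := dvdn_gcdl p q.
have gq : (g %| q)%N := dvdn_gcdr p q.
have hl1 : (q %/ g * p = l)%N by rewrite mulnC muln_divA.
have hl2 : (p %/ g * q = l)%N by rewrite mulnC muln_divA // mulnC.
have [u [v huv]] := Bezoutz p q.
rewrite /gcdz /= -/g in huv.
pose a' := (p %/ g)%N%:Z; pose b' := (q %/ g)%N%:Z.
have key : a' * u + b' * v = 1.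
  apply: (@mulfI _ g%:Z); first by rewrite eqz_nat -lt0n.
  have hp : p%:Z = a' * g%:Z by rewrite -PoszM divnK.
  have hq : q%:Z = b' * g%:Z by rewrite -PoszM divnK.
  by rewrite mulr1 -[in RHS]huv hp hq; ring.
pose c (i j : 'I_s) : int :=
  if i == K0 then (if j == K0 then u else if j == K1 then v else 0)
  else if i == K1 then (if j == K0 then - b' else if j == K1 then a' else 0)
  else (i == j)%:R.
have row0 : forall x : 'I_s -> int, \sum_j c K0 j * x j = u * x K0 + v * x K1.
  move=> x; rewrite (bigD1 K0) //= (bigD1 K1) //= big1 ?addr0.
    by rewrite /c eqxx (negbTE K10) eqxx.
  by move=> j /andP [h1 h2]; rewrite /c eqxx (negbTE h1) (negbTE h2) mul0r.
have row1 : forall x : 'I_s -> int, \sum_j c K1 j * x j = - b' * x K0 + a' * x K1.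
  move=> x; rewrite (bigD1 K0) //= (bigD1 K1) //= big1 ?addr0.
    by rewrite /c eqxx (negbTE K10) eqxx.
  by move=> j /andP [h1 h2]; rewrite /c eqxx (negbTE K10) (negbTE h1) (negbTE h2) mul0r.
have rowo : forall (i : 'I_s) (x : 'I_s -> int), i != K0 -> i != K1 ->
   \sum_j c i j * x j = x i.
  move=> i x /negbTE h0 /negbTE h1; rewrite -sum_delta.
  by apply: eq_bigr => j _; rewrite /c h0 h1.
apply: (@mat_iso s m n c) => //.
- rewrite (bigD1 K0) // (bigD1 K1) //= [RHS](bigD1 K0) // [in RHS](bigD1 K1) //= EK0 EK1.
  rewrite [in RHS](eq_bigr (fun i : 'I_s => m i.+1)); last by move=> i /andP[h1 h2]; rewrite E.
  by rewrite !mulnA [(g * l)%N]mulnC muln_lcm_gcd.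
- move=> i j; rewrite /c.
  case: (eqVneq i K0) => [->|i0].
    case: (eqVneq j K0) => [->|j0]; first by rewrite EK0; apply: dvdz_mull.
    case: (eqVneq j K1) => [->|j1]; first by rewrite EK0; apply: dvdz_mull.
    by rewrite mul0r dvdz0.
  case: (eqVneq i K1) => [->|i1].
    case: (eqVneq j K0) => [->|j0].
      by rewrite EK1 -/p mulNr -PoszM hl1 rpredN; exact: dvdzz.
    case: (eqVneq j K1) => [->|j1]; first by rewrite EK1 -/q -PoszM hl2; exact: dvdzz.
    by rewrite mul0r dvdz0.
  case: (eqVneq i j) => [<-|ij]; last by rewrite mul0r dvdz0.
  by rewrite mul1r E //; exact: dvdzz.
- move=> x H j.
  have [p1 q1] : ((p%:Z %| x K0) /\ (q%:Z %| x K1))%Z.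
    have H0 := H K0; have H1 := H K1.
    rewrite row0 EK0 in H0; rewrite row1 EK1 in H1.
    have pl : (p%:Z %| l%:Z)%Z by apply: dvdn_lcml.
    have ql : (q%:Z %| l%:Z)%Z by apply: dvdn_lcmr.
    have hp : p%:Z = a' * g%:Z by rewrite -PoszM divnK.
    have hq : q%:Z = b' * g%:Z by rewrite -PoszM divnK.
    split.
      have -> : x K0 = a' * (u * x K0 + v * x K1) - v * (- b' * x K0 + a' * x K1).
        transitivity ((a' * u + b' * v) * x K0); first by rewrite key mul1r.
        ring.
      apply: rpredB; last by apply: dvdz_mull; apply: dvdz_trans pl H1.
      by rewrite hp; apply: dvdz_mul.
    have -> : x K1 = b' * (u * x K0 + v * x K1) + u * (- b' * x K0 + a' * x K1).
      transitivity ((a' * u + b' * v) * x K1); first by rewrite key mul1r.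
      ring.
    apply: rpredD; last by apply: dvdz_mull; apply: dvdz_trans ql H1.
    by rewrite hq; apply: dvdz_mul.
  case: (eqVneq j K0) => [->//|j0].
  case: (eqVneq j K1) => [->//|j1].
  by have := H j; rewrite rowo // E.
Qed.
Local Close Scope ring_scope.
Definition st s (m : nat -> nat) t j :=
  if j < t then m j else if j == t then gcd_from s m t else a_seq s m j.

Lemma gf_step s m t : t <= s -> gcd_from s m t = gcdn (m t) (gcd_from s m t.+1).
Proof. by move=> ts; rewrite /gcd_from big_ltn // ltnS. Qed.

Lemma gf_s s m : gcd_from s m s = m s.
Proof. by rewrite /gcd_from big_nat1. Qed.

Theorem proposition1 (s : nat) (m : nat -> nat) :
  0 < s ->
  (forall i, 1 <= i <= s -> 0 < m i) ->
  cycprod_iso s s m (a_seq s m).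
Proof.
move=> s0 Hm.
have gpos t : 1 <= t <= s -> 0 < gcd_from s m t.
  by move=> /andP[t1 ts]; rewrite gf_step // gcdn_gt0 Hm ?t1.
have apos j : 1 <= j <= s -> 0 < a_seq s m j.
  move=> /andP[j1 js]; rewrite /a_seq.
  case: eqP => [_|jn1]; first by apply: gpos; apply/andP; split; lia.
  case: eqP => [_|jns].
    by rewrite lcmn_gt0 !Hm //; apply/andP; split; lia.
  by rewrite lcmn_gt0 Hm ?gpos //; apply/andP; split; lia.
have stpos t : 1 <= t <= s -> forall i : 'I_s, 0 < st s m t i.+1.
  move=> /andP[t1 ts] i; have := ltn_ord i; rewrite /st => ilt.
  case: (ltnP i.+1 t) => h; first by apply: Hm; apply/andP; split; lia.
  case: eqP => [_|_]; first by apply: gpos; apply/andP; split; lia.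
  by apply: apos; apply/andP; split; lia.
have mpos : forall i : 'I_s, 0 < m i.+1.
  by move=> i; apply: Hm; have := ltn_ord i; lia.
have base : cycprod_iso s s m (st s m s).
  apply: ext_iso => // i; rewrite /st; case: (ltnP i.+1 s) => h //.
  have -> : i.+1 = s by have := ltn_ord i; lia.
  by rewrite eqxx gf_s.
have ind : forall d, d < s -> cycprod_iso s s m (st s m (s - d)).
  elim => [_|d IH hd]; first by rewrite subn0.
  apply: iso_trans (IH (ltnW hd)) _.
  have t1 : 1 <= s - d.+1 by lia.
  have ts : s - d.+1 < s by lia.
  have E : s - d = (s - d.+1).+1 by lia.
  rewrite E; move: t1 ts; set t := s - d.+1 => t1 ts.
  have t0s : t.-1 < s by lia.
  apply: (@step_iso s _ _ (Ordinal t0s) (Ordinal ts)).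
  - by rewrite /= prednK.
  - by apply: stpos; apply/andP; split; lia.
  - by apply: stpos; apply/andP; split; lia.
  - move=> i /eqP h0 /eqP h1.
    have h0' : i.+1 != t by apply/eqP => e; apply: h0; apply: val_inj => /=; lia.
    have h1' : i.+1 != t.+1 by apply/eqP => e; apply: h1; apply: val_inj => /=; lia.
    rewrite /st (negbTE h0') (negbTE h1').
    case: (ltnP i.+1 t) => h.
      by have -> : i.+1 < t.+1 by lia.
    by have -> : i.+1 < t.+1 = false by apply/negbTE; lia.
  - rewrite /= prednK // /st !ltnn !eqxx leqnn.
    by rewrite gf_step //; lia.
  - rewrite /= prednK // /st !ltnn !eqxx leqnn.
    have -> : t.+1 < t = false by apply/negbTE; lia.
    have -> : (t.+1 == t) = false by apply/negbTE; lia.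
    rewrite /a_seq.
    have -> : (t.+1 == 1) = false by apply/negbTE; lia.
    case: eqP => [e|_] //.
    by rewrite -e gf_s.
have H1 : cycprod_iso s s m (st s m 1).
  have -> : 1 = s - s.-1 by lia.
  by apply: ind; lia.
apply: iso_trans H1 _.
apply: ext_iso; first by apply: stpos; rewrite leqnn.
move=> i; rewrite /st /=.
by case: eqP => [->|_].
Qed.
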